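(* Let $H$ be a finite two-step nilpotent $p$-group with cyclic commutator subgroup $[H,H]$, and let $A$ be a maximal abelian subgroup of $H$. Then $m_{\mathsf{faithful}}(H)\le [H:A]+m_{\mathsf{faithful}}(Z(H))-1$.
   Context: For a finite group $G$, $m_{\mathsf{faithful}}(G)$ denotes the smallest dimension of a faithful complex representation of $G$. *)

(* Defs.v *)
From HB Require Import structures.
From mathcomp Require Import all_boot all_order all_algebra all_fingroup all_solvable all_field all_character.
Set Implicit Arguments. Unset Strict Implicit. Unset Printing Implicit Defensive.

Definition has_faithful_rep (gT : finGroupType) (G : {group gT}) (n : nat) : Prop :=
  exists rG : mx_representation algC G n, mx_faithful rG.

Definition is_m_faithful (gT : finGroupType) (G : {group gT}) (m : nat) : Prop :=
  has_faithful_rep G m /\ (forall n, has_faithful_rep G n -> m <= n).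

(* Main.v *)
Require Import Defs.
From HB Require Import structures.
From mathcomp Require Import all_boot all_order all_algebra all_fingroup all_solvable all_field all_character.
From mathcomp Require Import zify.
Set Implicit Arguments. Unset Strict Implicit. Unset Printing Implicit Defensive.
Import GRing.Theory Num.Theory.
Section Helpers.
Local Open Scope group_scope.
Local Open Scope ring_scope.

Lemma lin_index (gT : finGroupType) (S : {group gT}) (p : nat) (xi : 'CF(S)) :
  xi \is a linear_char -> (exponent S %| p)%N -> (#|S : cfker xi| %| p)%N.
Proof.
move=> Lxi hp.
have nK : S \subset 'N(cfker xi) := normal_norm (cfker_normal xi).
rewrite -card_quotient //.
have eZ : ('Z(xi))%CF = S :> {set gT}.
  apply/eqP; rewrite eqEsubset cfcenter_sub; apply/subsetP => x Sx.
  by rewrite char_cfcenterE ?lin_charW // normC_lin_char // lin_char1.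
have cyc := cfcenter_cyclic xi; rewrite eZ in cyc.
rewrite -exponent_cyclic //; exact: dvdn_trans (exponent_quotient _ _) hp.
Qed.

Lemma count_bound (gT : finGroupType) (p : nat) (I : Type) (K : I -> {group gT})
  (s : seq I) (T : {group gT}) :
  (forall i (U : {group gT}), U \subset T -> #|U : U :&: K i| <= p)%N ->
  T :&: \bigcap_(i <- s) K i \subset [1] -> (#|T| <= p ^ size s)%N.
Proof.
elim: s T => [|i s IH] T hK hT /=.
  rewrite big_nil setIT in hT.
  by rewrite expn0 -(cards1 (1%g : gT)); apply: subset_leq_card.
rewrite big_cons setIA in hT.
have h1 := IH (T :&: K i)%G (fun j U sU => hK j U (subset_trans sU (subsetIl _ _))) hT.
rewrite -(Lagrange (subsetIl T (K i))) expnSr.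
exact: leq_mul h1 (hK i T (subxx _)).
Qed.

Lemma lin_list (gT : finGroupType) (p : nat) (H : {group gT}) :
  forall n (S : {group gT}), (#|S| <= n)%N -> p.-group S -> S \subset H ->
  S :&: H^`(1)%g \subset [1] ->
  exists s : seq 'CF(H), [/\ all (fun mu => mu \is a linear_char) s,
     (size s <= logn p #|S|)%N & S :&: \bigcap_(mu <- s) cfker mu \subset [1]].
Proof.
elim=> [|n IH] S hS pS sSH tSH.
  by move: (cardG_gt0 S); rewrite leqNgt ltnS hS.
case/boolP: (S :==: 1%g) => [/eqP S1 | ntS].
  by exists [::]; split=> //; rewrite big_nil setIT S1 subxx.
have [x Sx ntx] := trivgPn _ ntS.
have nH'x : x \notin H^`(1)%g.
  apply: contra ntx => H'x.
  by have := subsetP tSH x; rewrite inE Sx H'x => /(_ isT); rewrite inE.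
have [i /andP[Li nKx]] : exists i : Iirr H,
    ('chi_i \is a linear_char) && (x \notin cfker 'chi_i).
  apply/existsP; apply: contraR nH'x => /existsPn allK; rewrite ?negbK.
  rewrite -cap_cfker_lin_irr; apply/bigcapP => j Lj.
  by move: (allK j); rewrite Lj /= negbK.
set S' := (S :&: cfker 'chi_i)%G.
have prS : S' \proper S.
  apply/properP; split; first exact: subsetIl.
  by exists x => //; rewrite inE Sx.
have ltS := proper_card prS.
have h1 : (#|S'| <= n)%N by rewrite -ltnS; apply: leq_trans ltS hS.
have h2 : p.-group S' := pgroupS (subsetIl _ _) pS.
have h3 : S' \subset H := subset_trans (subsetIl _ _) sSH.
have h4 : S' :&: H^`(1)%g \subset [1].
  by apply: subset_trans tSH; rewrite setSI // subsetIl.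
have [s [Ls szs ks]] := IH S' h1 h2 h3 h4.
exists ('chi_i :: s); split=> /=.
- by rewrite Li.
- have [pr _ _] := pgroup_pdiv pS ntS.
  have pS' : p.-group S' := pgroupS (subsetIl _ _) pS.
  have lt : (logn p #|S'| < logn p #|S|)%N.
    by move: ltS; rewrite {1}(card_pgroup pS) {1}(card_pgroup pS') ltn_exp2l ?prime_gt1.
  exact: leq_ltn_trans szs lt.
- by rewrite big_cons setIA.
Qed.

Lemma ker_addl (gT : finGroupType) (G : {group gT}) (a b : 'CF(G)) :
  a \is a character -> b \is a character -> cfker (a + b) \subset cfker a.
Proof.
move=> Na Nb; rewrite (cfkerE Na) subsetI cfker_sub; apply/bigcapsP => i Ci.
apply: cfker_constt (rpredD Na Nb) _.
rewrite irr_consttE cfdotDl; move: Ci; rewrite irr_consttE.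
have ha := natr_ge0 (Cnat_cfdot_char_irr i Na).
have hb := natr_ge0 (Cnat_cfdot_char_irr i Nb).
move=> nz; rewrite paddr_eq0 //; by rewrite (negbTE nz).
Qed.

Lemma sum_lin (gT : finGroupType) (G : {group gT}) (s : seq 'CF(G)) :
  all (fun mu => mu \is a linear_char) s ->
  [/\ \sum_(mu <- s) mu \is a character, (\sum_(mu <- s) mu) 1%g = (size s)%:R
    & cfker (\sum_(mu <- s) mu) \subset \bigcap_(mu <- s) cfker mu].
Proof.
elim: s => [|mu s IH] /=.
  by rewrite !big_nil; split; rewrite ?cfun0_char ?cfunE ?subsetT.
move=> /andP[Lmu Ls]; have [N1 e1 k1] := IH Ls; rewrite !big_cons; split.
- exact: rpredD (lin_charW Lmu) N1.
- by rewrite cfunE e1 lin_char1 // -add1n natrD.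
- rewrite subsetI (ker_addl (lin_charW Lmu) N1) /=.
  apply: subset_trans _ k1; rewrite addrC; exact: ker_addl N1 (lin_charW Lmu).
Qed.

End Helpers.

Theorem corollary3p8 (gT : finGroupType) (p : nat) (H A : {group gT})
  (mH mZ : nat) :
  prime p -> (p.-group H)%g -> nil_class H = 2 -> cyclic [~: H, H]%g ->
  [max A of B | (B \subset H) && abelian B]%g ->
  is_m_faithful H mH -> is_m_faithful 'Z(H)%G mZ ->
  mH <= #|H : A|%g + mZ - 1.
Proof.
Local Open Scope group_scope.
Local Open Scope ring_scope.
move=> pr pH cl2 cycH' maxA [_ minH] [[rZ fZ] _].
have /andP[sAH cAA] := maxgroupp maxA.
have pZ : p.-group 'Z(H) := pgroupS (center_sub H) pH.
have nab : ~~ abelian H by rewrite -nil_class1 cl2.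
have ntH' : H^`(1)%g != 1%g by apply: contra nab => /eqP h; apply/derG1P.
have sH'Z : H^`(1)%g \subset 'Z(H) by rewrite -nil_class2 cl2.
have cycH'' : cyclic H^`(1)%g by rewrite derg1.
have pH' := pgroupS (der_sub 1 H) pH.
have [_ pdiv _] := pgroup_pdiv pH' ntH'.
have [c H'c oc] := Cauchy pr pdiv.
set E := 'Ohm_1('Z(H))%G.
have hE : E = 'Ldiv_p('Z(H)) :> {set gT}.
  rewrite /E /= (OhmEabelian pZ) ?expn1 //.
  exact: abelianS (Ohm_sub 1 _) (center_abelian H).
have memE x : reflect (x \in 'Z(H) /\ (x ^+ p = 1)%g) (x \in E).
  by rewrite hE; apply: LdivP.
have sEZ : E \subset 'Z(H) := Ohm_sub 1 _.
have pE : p.-group E := pgroupS sEZ pZ.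
have expE : (exponent E %| p)%N by apply/exponentP => x /memE[].
have Ec : c \in E.
  by apply/memE; split; [exact: subsetP sH'Z c H'c | rewrite -oc expg_order].
have ntc : c != 1%g by rewrite -order_gt1 oc prime_gt1.
have [i0 nKc] : exists i0 : Iirr H, c \notin cfker 'chi_i0.
  apply/existsP; apply: contraR ntc => /existsPn allK; rewrite ?negbK.
  have : c \in \bigcap_i cfker 'chi[H]_i.
    by apply/bigcapP => i _; move: (allK i); rewrite negbK.
  by rewrite TI_cfker_irr inE.
set chi := 'chi_i0.
set S := (E :&: cfker chi)%G.
have tSH' : S :&: H^`(1)%g \subset [1].
  apply/subsetP => y /setIP[/setIP[Ey Ky] H'y]; rewrite inE.
  apply/negPn/negP => nty.
  have /memE[_ yp] := Ey.
  have oy : #[y]%g = p.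
    apply/(prime_nt_dvdP pr); first by rewrite order_eq1.
    by rewrite order_dvdn yp.
  have eq : <[y]> :==: <[c]> by
    rewrite (eq_subG_cyclic cycH'') ?cycle_subG // -!orderE oy oc.
  move/eqP: eq => eq.
  have : c \in <[y]> by rewrite eq cycle_id.
  have : <[y]> \subset cfker chi by rewrite cycle_subG.
  by move=> /subsetP h /h; rewrite (negbTE nKc).
have prSE : S \proper E.
  by apply/properP; split; [exact: subsetIl | exists c => //; rewrite inE (negbTE nKc) andbF].
have pS : p.-group S := pgroupS (subsetIl _ _) pE.
have ltS : (logn p #|S| < logn p #|E|)%N.
  have := proper_card prSE.
  by rewrite {1}(card_pgroup pS) {1}(card_pgroup pE) ltn_exp2l ?prime_gt1.
set phi := cfRepr rZ.
have Nphi : phi \is a character := cfRepr_char rZ.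
have kphi : cfker phi \subset [1] by rewrite cfker_repr.
have cZ : abelian 'Z(H) := center_abelian H.
have linZ : forall i : Iirr 'Z(H), 'chi_i \is a linear_char by apply/char_abelianP.
set I := irr_constt phi.
have bE : (#|E| <= p ^ #|I|)%N.
  rewrite [#|I|]cardE.
  apply: (@count_bound gT p _ (fun i : Iirr 'Z(H) => (cfker 'chi_i)%G) (enum I) E).
    move=> i U sUE /=; have sUZ := subset_trans sUE sEZ.
    rewrite -cfker_Res ?irr_char //; apply: dvdn_leq (prime_gt0 pr) _.
    apply: lin_index; first exact: cfRes_lin_char.
    exact: dvdn_trans (exponentS sUE) expE.
  rewrite big_enum /=; apply: subset_trans kphi; rewrite (cfkerE Nphi).
  exact: setSI sEZ.
have IZ : (#|I| <= mZ)%N.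
  have e1 : phi 1%g = mZ%:R := cfRepr1 rZ.
  rewrite -(ler_nat algC) -e1.
  rewrite {1}[phi]cfun_sum_constt sum_cfunE.
  rewrite (_ : #|I|%:R = \sum_(i in I) (1 : algC)); last by rewrite sumr_const.
  apply: ler_sum => i Ii; rewrite cfunE lin_char1 // mulr1.
  have /natrP[n en] := Cnat_cfdot_char_irr i Nphi.
  by move: Ii; rewrite irr_consttE en pnatr_eq0 ler1n lt0n.
have rI : (logn p #|E| <= #|I|)%N.
  by rewrite -(leq_exp2l _ _ (prime_gt1 pr)) -(card_pgroup pE).
have sSH : S \subset H.
  exact: subset_trans (subsetIl _ _) (subset_trans sEZ (center_sub H)).
have [s [Ls szs ks]] := @lin_list gT p H #|S| S (leqnn _) pS sSH tSH'.
have /natrP[d ed] := Cnat_irr1 i0.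
have dA : (d <= #|H : A|)%N.
  have [j Cj] := neq0_has_constt (@Res_irr_neq0 _ H A i0).
  have Ci0 : i0 \in irr_constt ('Ind[H] 'chi[A]_j) by rewrite constt_Ind_Res.
  have := char1_ge_constt (cfInd_char H (irr_char j)) Ci0.
  have linA : forall i : Iirr A, 'chi_i \is a linear_char by apply/char_abelianP.
  by rewrite cfInd1 // ed (lin_char1 (linA j)) mulr1 ler_nat.
have [Nsum esum ksum] := sum_lin Ls.
set N := (#|H : A| + mZ - 1)%N.
have aux : forall d0 a b c e f g : nat,
    (d0 <= a -> b <= c -> c < e -> e <= f -> f <= g -> d0 + b <= a + g - 1)%N.
  by clear; move=> *; lia.
have hdk : (d + size s <= N)%N by exact: aux dA szs ltS rI IZ.
set psi := chi + (\sum_(mu <- s) mu) + (N - d - size s)%:R *: 1.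
have Npsi : psi \is a character.
  by rewrite rpredD ?rpredD ?irr_char ?rpredZnat ?cfun1_char.
have psi1 : psi 1%g = N%:R.
  rewrite /psi !cfunE esum cfun1E group1 mulr1 ed -!natrD.
  congr _%:R; rewrite -subnDA; move: hdk; clear; move: (d + size s)%N => k hk.
  exact: subnKC hk.
have kpsi : cfker psi \subset [1].
  have k1 : cfker psi \subset cfker (chi + \sum_(mu <- s) mu).
    by rewrite ker_addl ?rpredD ?irr_char ?rpredZnat ?cfun1_char.
  have kc : cfker psi \subset cfker chi.
    by apply: subset_trans k1 _; rewrite ker_addl ?irr_char.
  have km : cfker psi \subset \bigcap_(mu <- s) cfker mu.
    by apply: subset_trans ksum; apply: subset_trans k1 _; rewrite addrC ker_addl ?irr_char.
  rewrite subG1; apply/negPn/negP => ntK.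
  have := meet_center_nil (pgroup_nil pH) (cfker_normal psi) ntK.
  move=> ntKZ.
  have pKZ : p.-group (cfker psi :&: 'Z(H)) := pgroupS (subsetIr _ _) pZ.
  have [_ pd _] := pgroup_pdiv pKZ ntKZ.
  have [x /setIP[Kx Zx] ox] := Cauchy pr pd.
  have Ex : x \in E by apply/memE; split => //; rewrite -ox expg_order.
  have : x \in S :&: \bigcap_(mu <- s) cfker mu.
    apply/setIP; split; last exact: subsetP km x Kx.
    by apply/setIP; split; [exact: Ex | exact: subsetP kc x Kx].
  move/(subsetP ks); rewrite inE => /eqP x1.
  by move: ox; rewrite x1 order1 => p1; move: (prime_gt1 pr); rewrite -p1.
case/char_reprP: Npsi => [[n rG]] epsi.
have eN : n = N.
  by apply/eqP; rewrite -(eqr_nat algC) -psi1 epsi cfRepr1.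
rewrite -/N -eN; apply: minH; exists rG.
by rewrite /mx_faithful -cfker_repr -[cfRepr rG]/(cfRepr (Representation rG)) -epsi.
Qed.
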